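(* Let $\mathbb{G}$ be a partially commutative group, $x$ one of its canonical generators, $n\ge 2$, and let $\mathbb{H}=\langle \mathbb{G}, A\mid [A,C_{\mathbb{G}}(x)]=1\rangle$, where $A\cong\mathbb{Z}^{n-1}$ is free abelian (i.e. $\mathbb{H}$ is obtained from $\mathbb{G}$ by adjoining a free abelian group $A$ of rank $n-1$ whose elements commute with every element of the centraliser $C_{\mathbb{G}}(x)$). Then $\mathbb{H}$ is discriminated by $\mathbb{G}$.
   Context: A partially commutative group is $\mathbb{G}(\Gamma)=\langle V(\Gamma)\mid [x,y]=1 \text{ for } (x,y)\in E(\Gamma)\rangle$ for a finite simplicial graph $\Gamma$; its canonical generators are the elements of $V(\Gamma)$. A group $H$ is discriminated by $G$ if for every finite set $S\subseteq H$ there is a homomorphism $H\to G$ that is injective on $S$. *)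

(* Defs.v *)
(* Groups given by presentations are encoded as
   words over generators modulo the congruence generated by free
   cancellation and the relators (i.e. the quotient of the free group by the
   normal closure of the relators). *)
From Stdlib Require List.
From mathcomp Require Import all_boot.
Set Implicit Arguments. Unset Strict Implicit. Unset Printing Implicit Defensive.

(* A letter is a generator together with a sign: (a, false) = a, (a, true) = a^-1. *)
Definition word (X : Type) := seq (X * bool).

Definition winv (X : Type) (w : word X) : word X :=
  rev (map (fun l => (l.1, ~~ l.2)) w).

Definition wcomm (X : Type) (u v : word X) : word X :=
  winv u ++ winv v ++ u ++ v.

Definition gen (X : Type) (a : X) : word X := [:: (a, false)].

Inductive weq (X : Type) (R : word X -> Prop) : word X -> word X -> Prop :=
| weq_refl u : weq R u u
| weq_sym u v : weq R u v -> weq R v u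
| weq_trans u v w : weq R u v -> weq R v w -> weq R u w
| weq_cancel u v a b : weq R (u ++ [:: (a, b); (a, ~~ b)] ++ v) (u ++ v)
| weq_rel u v r : R r -> weq R (u ++ r ++ v) (u ++ v).

Definition pc_rel (T : Type) (e : rel T) (r : word T) : Prop :=
  exists x y, e x y /\ r = wcomm (gen x) (gen y).

Definition in_centraliser (T : Type) (e : rel T) (x : T) (c : word T) : Prop :=
  weq (pc_rel e) (c ++ gen x) (gen x ++ c).

(* H = < G, A | [A, C_G(x)] = 1 >, A = Z^(n-1) free abelian with basis
   a_0, ..., a_(n-2) (the generators inr i, i : 'I_n.-1). *)
Definition ext_rel (T : Type) (e : rel T) (x : T) (n : nat)
  (r : word (T + 'I_n.-1)) : Prop :=
  (exists r0, pc_rel e r0 /\ r = map (fun l => (inl l.1, l.2)) r0)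
  \/ (exists i j : 'I_n.-1, r = wcomm (gen (inr i)) (gen (inr j)))
  \/ (exists (i : 'I_n.-1) (c : word T), in_centraliser e x c /\
        r = wcomm (gen (inr i)) (map (fun l => (inl l.1, l.2)) c)).
Arguments ext_rel {T} e x n r.

Definition wsubst (X Y : Type) (f : X -> word Y) (w : word X) : word Y :=
  flatten (map (fun l => if l.2 then winv (f l.1) else f l.1) w).

(* f : generators of <X|R> -> <Y|Q> defines a homomorphism iff every relator
   is sent to the identity. *)
Definition is_hom (X Y : Type) (R : word X -> Prop) (Q : word Y -> Prop)
  (f : X -> word Y) : Prop :=
  forall r, R r -> weq Q (wsubst f r) [::].

Definition discriminated_by (X Y : Type) (R : word X -> Prop) (Q : word Y -> Prop)
  : Prop :=
  forall S : seq (word X), exists f : X -> word Y, is_hom R Q f /\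
    forall u v, Stdlib.Lists.List.In u S -> Stdlib.Lists.List.In v S -> ~ weq R u v ->
      ~ weq Q (wsubst f u) (wsubst f v).

(* Main.v *)
Require Import Defs.
From mathcomp Require Import all_boot.
From mathcomp Require Import all_algebra zify.
From Stdlib Require Import FunctionalExtensionality.
Set Implicit Arguments. Unset Strict Implicit. Unset Printing Implicit Defensive.
Import GRing.Theory.


Section Weq.
Variables (X : Type) (R : word X -> Prop).
Notation W := (weq R).

Lemma weq_cat p q u v : W u v -> W (p ++ u ++ q) (p ++ v ++ q).
Proof.
elim=> {u v}.
- by move=> u; apply: weq_refl.
- by move=> u v _ H; apply: weq_sym.
- by move=> u v w _ H1 _ H2; apply: weq_trans H2.
- move=> u v a b.
  have -> : p ++ (u ++ [:: (a, b); (a, ~~ b)] ++ v) ++ q = (p ++ u) ++ [:: (a, b); (a, ~~ b)] ++ (v ++ q) by rewrite !catA.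
  have -> : p ++ (u ++ v) ++ q = (p ++ u) ++ (v ++ q) by rewrite !catA.
  exact: weq_cancel.
- move=> u v r Hr.
  have -> : p ++ (u ++ r ++ v) ++ q = (p ++ u) ++ r ++ (v ++ q) by rewrite !catA.
  have -> : p ++ (u ++ v) ++ q = (p ++ u) ++ (v ++ q) by rewrite !catA.
  exact: weq_rel.
Qed.

Lemma weq_catl p u v : W u v -> W (p ++ u) (p ++ v).
Proof. by move=> H; have := weq_cat p [::] H; rewrite !cats0. Qed.
Lemma weq_catr q u v : W u v -> W (u ++ q) (v ++ q).
Proof. by move=> H; exact: (weq_cat [::] q H). Qed.
Lemma weq_app u u' v v' : W u u' -> W v v' -> W (u ++ v) (u' ++ v').
Proof.
move=> H1 H2; apply: weq_trans (weq_catr v H1) _; exact: weq_catl.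
Qed.

Lemma weq_canc a b : W [:: (a, b); (a, ~~ b)] [::].
Proof. exact: (weq_cancel R [::] [::] a b). Qed.

Lemma winv_cat (u v : word X) : winv (u ++ v) = winv v ++ winv u.
Proof. by rewrite /winv map_cat rev_cat. Qed.
Lemma winv_cons (l : X * bool) (u : word X) : winv (l :: u) = winv u ++ [:: (l.1, ~~ l.2)].
Proof. by rewrite /winv /= rev_cons cats1. Qed.
Lemma winvK (u : word X) : winv (winv u) = u.
Proof. rewrite /winv map_rev revK -map_comp -[RHS]map_id; apply: eq_map; by case=> a b /=; rewrite negbK. Qed.

Lemma weq_winvr (u : word X) : W (u ++ winv u) [::].
Proof.
elim: u => [|[a b] u IH] /=; first exact: weq_refl.
rewrite winv_cons catA.
apply: weq_trans (weq_cat [:: (a, b)] [:: (a, ~~ b)] IH) _ => /=.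
exact: weq_canc.
Qed.
Lemma weq_winvl (u : word X) : W (winv u ++ u) [::].
Proof. by have := weq_winvr (winv u); rewrite winvK. Qed.

Lemma weq_relr r : R r -> W r [::].
Proof. by move=> Hr; have := weq_rel [::] [::] Hr; rewrite /= cats0. Qed.

Definition wcom (u v : word X) := W (u ++ v) (v ++ u).

Lemma wcom_sym u v : wcom u v -> wcom v u.
Proof. by move=> H; apply: weq_sym. Qed.
Lemma wcom_nil u : wcom u [::].
Proof. by rewrite /wcom cats0; apply: weq_refl. Qed.
Lemma wcom_catr u v1 v2 : wcom u v1 -> wcom u v2 -> wcom u (v1 ++ v2).
Proof.
move=> H1 H2; rewrite /wcom.
apply: weq_trans (_ : W ((v1 ++ u) ++ v2) _); first by rewrite catA; exact: weq_catr.
rewrite -catA -[(v1 ++ v2) ++ u]catA; apply: weq_catl; exact: H2.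
Qed.
Lemma wcom_catl u1 u2 v : wcom u1 v -> wcom u2 v -> wcom (u1 ++ u2) v.
Proof. by move=> H1 H2; apply: wcom_sym; apply: wcom_catr; apply: wcom_sym. Qed.


Lemma wcom_inv1 l1 l2 : wcom [:: l1] [:: l2] -> wcom [:: (l1.1, ~~ l1.2)] [:: l2].
Proof.
case: l1 => a b /= H; rewrite /wcom /=.
set ai := (a, ~~ b).
apply: weq_trans (_ : W ([:: ai; l2] ++ [:: (a, b); ai] ++ [::]) _).
  by apply: weq_sym; exact: (weq_cancel R [:: ai; l2] [::] a b).
apply: weq_trans (_ : W ([:: ai] ++ ([:: (a,b); l2]) ++ [:: ai]) _).
  exact: (weq_cat [:: ai] [:: ai] (weq_sym H)).
have := weq_cancel R [::] [:: l2; ai] a (~~ b); rewrite negbK /=. exact.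
Qed.

Lemma wcom_sgn a b c d : wcom [:: (a, false)] [:: (c, false)] -> wcom [:: (a, b)] [:: (c, d)].
Proof.
move=> H.
have H1 : wcom [:: (a, b)] [:: (c, false)] by case: b; [exact: (wcom_inv1 H) | exact: H].
apply: wcom_sym; case: d; last exact: wcom_sym.
exact: (wcom_inv1 (wcom_sym H1)).
Qed.

Lemma wcom_nseq l1 l2 n k : wcom [:: l1] [:: l2] -> wcom (nseq n l1) (nseq k l2).
Proof.
move=> H.
have H1 : forall k, wcom [:: l1] (nseq k l2).
  elim=> [|k' IH] /=; first exact: wcom_nil.
  by have := wcom_catr H IH.
elim: n => [|n IH] /=; first exact: wcom_sym (wcom_nil _).
exact: (wcom_catl (H1 k) IH).
Qed.


Definition pw (a : X) (k : int) : word X :=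
  match k with Posz n => nseq n (a, false) | Negz n => nseq n.+1 (a, true) end.

Lemma nseq_red a b p q :
  W (nseq p (a, b) ++ nseq q (a, ~~ b)) (nseq (p - q) (a, b) ++ nseq (q - p) (a, ~~ b)).
Proof.
elim: q p => [|q IH] [|p]; rewrite ?subn0 ?sub0n ?cats0 /=; try exact: weq_refl.
rewrite !subSS.
apply: weq_trans (IH p).
have -> : forall w, (a, b) :: nseq p (a, b) ++ w = nseq p (a, b) ++ (a, b) :: w.
  by elim: p {IH} => //= p IHp w; rewrite IHp.
exact: (weq_cancel R (nseq p (a, b)) (nseq q (a, ~~ b)) a b).
Qed.

Lemma pw_sub a p q : pw a ((Posz p - Posz q)%R) = nseq (p - q) (a, false) ++ nseq (q - p) (a, true).
Proof.
case: (leqP q p) => h.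
  have -> : (Posz p - Posz q)%R = Posz (p - q) by lia.
  have -> : (q - p = 0)%N by lia.
  by rewrite cats0.
have -> : (Posz p - Posz q)%R = Negz (q - p).-1 by lia.
have -> : (p - q = 0)%N by lia.
have -> : (q - p = (q - p).-1.+1)%N by lia.
by [].
Qed.

Lemma pw_add a k k' : W (pw a k ++ pw a k') (pw a (k + k')%R).
Proof.
case: k => [p|n]; case: k' => [p'|n'] /=.
- by rewrite -nseqD; apply: weq_refl.
- have -> : (Posz p + Negz n')%R = (Posz p - Posz n'.+1)%R by lia.
  rewrite pw_sub; exact: (nseq_red a false p n'.+1).
- have -> : (Negz n + Posz p')%R = (Posz p' - Posz n.+1)%R by lia.
  rewrite pw_sub; apply: weq_trans (nseq_red a true n.+1 p') _ => /=.
  case: (leqP p' n.+1) => h.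
    have -> : (p' - n.+1 = 0)%N by lia.
    by rewrite cats0; apply: weq_refl.
  have -> : (n.+1 - p' = 0)%N by lia.
  by rewrite cats0; apply: weq_refl.
- have -> : nseq n (a, true) ++ (a, true) :: nseq n' (a, true) = (a, true) :: nseq (n + n') (a, true).
    by rewrite -[(a, true) :: nseq n' _]/(nseq n'.+1 (a, true)) -nseqD addnS.
  exact: weq_refl.
Qed.

Lemma pw0 a : pw a 0%R = [::]. Proof. by []. Qed.

Lemma wcom_pw a c k k' : wcom [:: (a, false)] [:: (c, false)] -> wcom (pw a k) (pw c k').
Proof.
move=> H; case: k => [p|n]; case: k' => [p'|n']; apply: wcom_nseq; exact: wcom_sgn.
Qed.

Lemma wcom_of_rel a c : R (wcomm (gen a) (gen c)) -> wcom [:: (c, false)] [:: (a, false)].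
Proof.
move=> Hr; rewrite /wcom /=.
have H1 := weq_rel [:: (c, false); (a, false)] [::] Hr.
rewrite /= in H1.
apply: weq_trans (weq_sym H1) _.
apply: weq_trans (weq_cancel R [:: (c, false)] [:: (c, true); (a, false); (c, false)] a false) _.
exact: (weq_cancel R [::] [:: (a, false); (c, false)] c false).
Qed.

End Weq.

Section Hom.
Variables (X Y : Type) (R : word X -> Prop) (Q : word Y -> Prop) (f : X -> word Y).

Lemma wsubst_cat u v : wsubst f (u ++ v) = wsubst f u ++ wsubst f v.
Proof. by rewrite /wsubst map_cat flatten_cat. Qed.

Lemma wsubst_winv u : wsubst f (winv u) = winv (wsubst f u).
Proof.
elim: u => [|[a b] u IH] //.
rewrite winv_cons wsubst_cat IH /= winv_cat; congr (_ ++ _).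
rewrite /wsubst /= cats0; case: b => //=; by rewrite winvK.
Qed.

Lemma hom_weq u v : is_hom R Q f -> weq R u v -> weq Q (wsubst f u) (wsubst f v).
Proof.
move=> Hf; elim=> {u v}.
- move=> u; exact: weq_refl.
- by move=> u v _ H; apply: weq_sym.
- by move=> u v w _ H1 _ H2; apply: weq_trans H2.
- move=> u v a b; rewrite !wsubst_cat.
  have H : weq Q (wsubst f [:: (a, b); (a, ~~ b)]) [::].
    rewrite /wsubst /= cats0; case: b => /=.
      exact: weq_winvl.
    exact: weq_winvr.
  exact: (weq_cat (wsubst f u) (wsubst f v) H).
- move=> u v r Hr; rewrite !wsubst_cat.
  exact: (weq_cat (wsubst f u) (wsubst f v) (Hf r Hr)).
Qed.
End Hom.

Local Open Scope ring_scope.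

Section Piling.
Variables (X : eqType) (e : rel X) (e_sym : symmetric e) (e_irr : irreflexive e) (V : zmodType).

Definition state := X -> seq (option V).
Definition empty : state := fun _ => [::].
Definition top t (s : state) := head None (s t).
Definition push t g (s : state) : state :=
  fun w => if w == t then Some g :: s w else if e t w then s w else None :: s w.
Definition pop t (s : state) : state :=
  fun w => if w == t then behead (s w) else if e t w then s w else behead (s w).
Definition pushz t g s := if g == 0 then s else push t g s.
Definition cur t s := if top t s is Some h then h else 0.
Definition base t s := if top t s is Some _ then pop t s else s.
Definition act t g s := pushz t (cur t s + g) (base t s).

Inductive valid : state -> Prop :=
| vnil : valid empty
| vpush s t g : valid s -> top t s = None -> g != 0 -> valid (push t g s).

Lemma pop_push t g s : pop t (push t g s) = s.
Proof.
apply: functional_extensionality => w; rewrite /pop /push.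
by case: (w =P t) => //= _; case: (e t w).
Qed.

Lemma top_push_same t g s : top t (push t g s) = Some g.
Proof. by rewrite /top /push eqxx. Qed.

Lemma top_push_adj u t g s : e u t -> top t (push u g s) = top t s.
Proof.
move=> H; rewrite /top /push; case: (t =P u) => [E|_]; last by rewrite H.
by move: H; rewrite E e_irr.
Qed.

Lemma top_push_na u t g s : u != t -> ~~ e u t -> top t (push u g s) = None.
Proof.
move=> H1 H2; rewrite /top /push eq_sym (negbTE H1) (negbTE H2) //.
Qed.

Lemma push_comm t u g h s : e t u -> push t g (push u h s) = push u h (push t g s).
Proof.
move=> H; apply: functional_extensionality => w; rewrite /push.
have Hu : e u t by rewrite e_sym.
case: (w =P t) => [->|Hwt].
  have -> : (t == u) = false by apply/eqP => E; move: H; rewrite E e_irr.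
  by rewrite Hu.
case: (w =P u) => [->|Hwu]; first by rewrite H.
by case: (e t w); case: (e u w).
Qed.

Lemma pushz_comm t u g h s : e t u -> pushz t g (pushz u h s) = pushz u h (pushz t g s).
Proof. by move=> H; rewrite /pushz; case: (g == 0); case: (h == 0) => //; rewrite push_comm. Qed.

Lemma top_pushz_adj u t g s : e u t -> top t (pushz u g s) = top t s.
Proof. by move=> H; rewrite /pushz; case: (g == 0) => //; rewrite top_push_adj. Qed.

Lemma valid_top t s : valid s -> forall h, top t s = Some h ->
  [/\ valid (pop t s), top t (pop t s) = None, h != 0 & s = push t h (pop t s)].
Proof.
elim=> {s} [|s u g Hs IH Hu Hg] h.
  by [].
case: (u =P t) => [E|Hne].
  subst u; rewrite top_push_same => -[<-]; rewrite pop_push; split=> //.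
case Eut: (e u t).
  rewrite top_push_adj // => /IH [Hv Htop Hh Es].
  set s' := pop t s in Hv Htop Es *.
  have Htu : e t u by rewrite e_sym.
  have -> : push u g s = push t h (push u g s') by rewrite Es push_comm.
  rewrite pop_push; split=> //.
  - apply: vpush => //; by rewrite -Hu Es top_push_adj.
  - by rewrite top_push_adj.
rewrite top_push_na //; last by rewrite Eut.
by apply/eqP.
Qed.

Lemma valid_dec t s : valid s ->
  [/\ valid (base t s), top t (base t s) = None & s = pushz t (cur t s) (base t s)].
Proof.
move=> Hs; rewrite /base /cur; case Et: (top t s) => [h|].
  have [Hv Htop Hh Es] := valid_top Hs Et; split=> //.
  by rewrite /pushz (negbTE Hh).
by rewrite /pushz eqxx.
Qed.

Lemma curbase_pushz t k b : top t b = None -> cur t (pushz t k b) = k /\ base t (pushz t k b) = b.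
Proof.
move=> H; rewrite /pushz; case: (k =P 0) => [->|_].
  by rewrite /cur /base H.
by rewrite /cur /base top_push_same pop_push.
Qed.

Lemma valid_pushz t k b : valid b -> top t b = None -> valid (pushz t k b).
Proof. by move=> Hb Ht; rewrite /pushz; case: (k =P 0) => [_|/eqP Hk] //; apply: vpush. Qed.

Lemma valid_act t g s : valid s -> valid (act t g s).
Proof. by move=> /(valid_dec t) [Hv Ht _]; apply: valid_pushz. Qed.

Lemma act_add t g h s : valid s -> act t h (act t g s) = act t (g + h) s.
Proof.
move=> /(valid_dec t) [Hv Ht Es].
rewrite /act; have [-> ->] := curbase_pushz (cur t s + g) Ht.
by rewrite addrA.
Qed.

Lemma act0 t s : valid s -> act t 0 s = s.
Proof. by move=> /(valid_dec t) [Hv Ht Es]; rewrite /act addr0 -Es. Qed.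

Lemma act_comm t u g h s : e t u -> valid s -> act t g (act u h s) = act u h (act t g s).
Proof.
move=> Htu Hs.
have Hut : e u t by rewrite e_sym.
have [Hb1 Htb1 Es] := valid_dec u Hs.
set b1 := base u s in Hb1 Htb1 Es; set cu := cur u s in Es.
have [Hb Htb Eb1] := valid_dec t Hb1.
set b := base t b1 in Hb Htb Eb1; set ct := cur t b1 in Eb1.
have Hub : top u b = None by rewrite -Htb1 Eb1 top_pushz_adj.
have E2 : s = pushz t ct (pushz u cu b) by rewrite Es Eb1 pushz_comm.
have Ht' : forall k, top t (pushz u k b) = None by move=> k; rewrite top_pushz_adj.
have Hu' : forall k, top u (pushz t k b) = None by move=> k; rewrite top_pushz_adj.
have A1 : act u h s = pushz t ct (pushz u (cu + h) b).
  by rewrite /act -/cu -/b1 Eb1 pushz_comm.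
have A2 : act t g s = pushz u cu (pushz t (ct + g) b).
  rewrite /act E2; have [-> ->] := curbase_pushz ct (Ht' cu).
  by rewrite pushz_comm.
rewrite A1 A2 /act.
have [-> ->] := curbase_pushz ct (Ht' (cu + h)).
have [-> ->] := curbase_pushz cu (Hu' (ct + g)).
by rewrite pushz_comm.
Qed.

End Piling.

Local Open Scope ring_scope.

Section GSide.
Variables (T : eqType) (e : rel T) (e_sym : symmetric e) (e_irr : irreflexive e).

Let vact := valid_act e_sym e_irr.
Let aadd := act_add e_sym e_irr.
Let a0 := act0 e_sym e_irr.
Let acomm := act_comm e_sym e_irr.

Definition runG (w : word T) (s : state T int) : state T int :=
  foldl (fun s l => act e l.1 (if l.2 then -1 else 1) s) s w.

Lemma runG_cat u v s : runG (u ++ v) s = runG v (runG u s).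
Proof. by rewrite /runG foldl_cat. Qed.

Lemma runG_valid w s : valid e s -> valid e (runG w s).
Proof. elim: w s => [|l w IH] s Hs //=; apply: IH; exact: vact. Qed.

Lemma runG_sound u v : weq (pc_rel e) u v -> forall s, valid e s -> runG u s = runG v s.
Proof.
elim=> {u v}.
- by [].
- by move=> u v _ IH s Hs; rewrite IH.
- by move=> u v w _ IH1 _ IH2 s Hs; rewrite IH1 // IH2.
- move=> u v a b s Hs; rewrite !runG_cat; congr runG.
  have Hv := runG_valid u Hs; rewrite /runG /= aadd //.
  by case: b; rewrite /= ?addNr ?addrN a0.
- move=> u v r [y [z [Hyz ->]]] s Hs; rewrite !runG_cat; congr runG.
  have Hv := runG_valid u Hs; set s0 := runG u s in Hv *.
  rewrite /runG /=.
  have Hzy : e z y by rewrite e_sym.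
  rewrite (acomm _ _ Hyz); last exact: vact.
  rewrite (aadd _ _ _ Hv) addNr a0 //.
  by rewrite (aadd _ _ _ Hv) addNr a0.
Qed.

Lemma run_nseq t b n s : valid e s ->
  runG (nseq n (t, b)) s = act e t (if b then - (Posz n) else Posz n) s.
Proof.
elim: n s => [|n IH] s Hs /=.
  by case: b; rewrite ?oppr0 a0.
rewrite IH ?aadd //; last exact: vact.
congr act; by clear IH; case: b; lia.
Qed.

Lemma run_pw t k s : valid e s -> runG (pw t k) s = act e t k s.
Proof.
move=> Hs; case: k => n.
  exact: (run_nseq t false n Hs).
rewrite (run_nseq t true n.+1 Hs); congr act; lia.
Qed.

End GSide.

Local Open Scope ring_scope.

Section HSide.
Variables (T : finType) (e : rel T) (e_sym : symmetric e) (e_irr : irreflexive e) (x : T) (m : nat).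

Let vact := valid_act e_sym e_irr.
Let aadd := act_add e_sym e_irr.
Let a0 := act0 e_sym e_irr.

Definition LT := (T + 'I_m.+1)%type.
Definition Hrel : word LT -> Prop := ext_rel e x m.+2.
Notation W := (weq Hrel).
Definition vec := 'rV[int]_(m.+2).

Definition lv (l : LT) : T * vec :=
  match l with inl t => (t, delta_mx 0 ord0) | inr i => (x, delta_mx 0 (lift ord0 i)) end.

Definition runK (w : word LT) (s : state T vec) : state T vec :=
  foldl (fun s l => act e (lv l.1).1 (if l.2 then - (lv l.1).2 else (lv l.1).2) s) s w.

Lemma runK_cat u v s : runK (u ++ v) s = runK v (runK u s).
Proof. by rewrite /runK foldl_cat. Qed.

Definition TLs (s : seq 'I_m.+1) (g : vec) : word LT :=
  flatten [seq pw (inr i) (g 0 (lift ord0 i)) | i <- s].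
Definition TL g := TLs (index_enum 'I_m.+1) g.
Definition Lw (t : T) (g : vec) : word LT :=
  pw (inl t) (g 0 ord0) ++ (if t == x then TL g else [::]).
Definition okv (t : T) (g : vec) := t = x \/ forall j, j != ord0 -> g 0 j = 0.

Lemma com_aa i j : wcom Hrel [:: (inr i, false)] [:: (inr j, false)].
Proof. apply: wcom_of_rel; right; left; by exists j, i. Qed.

Lemma com_tu t u : e t u -> wcom Hrel [:: (inl t, false)] [:: (inl u, false)].
Proof.
move=> H; apply: wcom_of_rel; left; exists (wcomm (gen u) (gen t)); split=> //.
by exists u, t; rewrite e_sym.
Qed.

Lemma centr_gen u : u = x \/ e x u -> in_centraliser e x (gen u).
Proof.
case=> [->|H]; first exact: weq_refl.
have : wcom (pc_rel e) [:: (u, false)] [:: (x, false)].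
  by apply: wcom_of_rel; exists x, u.
done.
Qed.

Lemma com_ua u i : u = x \/ e x u -> wcom Hrel [:: (inl u, false)] [:: (inr i, false)].
Proof.
move=> H; apply: wcom_of_rel; right; right; exists i, (gen u); split=> //.
exact: centr_gen.
Qed.

Lemma wcom_TLs w s g : (forall i k, wcom Hrel w (pw (inr i) k)) -> wcom Hrel w (TLs s g).
Proof.
move=> H; elim: s => [|i s IH] /=; first exact: wcom_nil.
exact: wcom_catr.
Qed.

Lemma TLs_add s g h : W (TLs s g ++ TLs s h) (TLs s (g + h)).
Proof.
elim: s => [|i s IH] /=; first exact: weq_refl.
rewrite /TLs /= -!/(TLs _ _) mxE.
have Hc : wcom Hrel (TLs s g) (pw (inr i) (h 0 (lift ord0 i))).
  apply: wcom_sym; apply: wcom_TLs => j k; exact: wcom_pw (com_aa _ _).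
rewrite -catA (catA (TLs s g)).
apply: weq_trans (weq_catl _ (weq_catr _ Hc)) _.
rewrite -catA catA; apply: weq_app; first exact: pw_add.
exact: IH.
Qed.

Lemma Lw_add t g h : W (Lw t g ++ Lw t h) (Lw t (g + h)).
Proof.
rewrite /Lw mxE; case: (t =P x) => [->|_]; last first.
  by rewrite !cats0; apply: pw_add.
have Hc : wcom Hrel (TL g) (pw (inl x) (h 0 ord0)).
  apply: wcom_sym; apply: wcom_TLs => i k; apply: wcom_pw; apply: com_ua; by left.
rewrite -catA (catA (TL g)).
apply: weq_trans (weq_catl _ (weq_catr _ Hc)) _.
rewrite -catA catA; apply: weq_app; first exact: pw_add.
exact: TLs_add.
Qed.

Lemma TLs0 s (g : vec) : (forall i, g 0 (lift ord0 i) = 0) -> TLs s g = [::].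
Proof. by move=> H; elim: s => [|i s IH] //=; rewrite /TLs /= H. Qed.

Lemma Lw0 t : Lw t 0 = [::].
Proof.
rewrite /Lw mxE /=; case: (t == x) => //; rewrite /TL TLs0 // => i; by rewrite mxE.
Qed.

Lemma Lw_com t u g h : e u t -> wcom Hrel (Lw t h) (Lw u g).
Proof.
move=> Hut.
have Htu : e t u by rewrite e_sym.
have Hne : t != u by apply/eqP => E; move: Hut; rewrite E e_irr.
rewrite /Lw.
case: (t =P x) => [Et|Nt]; case: (u =P x) => [Eu|Nu].
- by move: Hne; rewrite Et Eu eqxx.
- subst t; rewrite cats0; apply: wcom_catl.
    exact: wcom_pw (com_tu Htu).
  apply: wcom_sym; apply: wcom_TLs => i k; apply: wcom_pw; apply: com_ua; by right.
- subst u; rewrite cats0; apply: wcom_catr.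
    exact: wcom_pw (com_tu Htu).
  apply: wcom_TLs => i k; apply: wcom_pw; apply: com_ua; by right.
- rewrite !cats0; exact: wcom_pw (com_tu Htu).
Qed.

Inductive Rep : state T vec -> word LT -> Prop :=
| Rnil : Rep (@empty T vec) [::]
| Rpush s r t g : Rep s r -> top t s = None -> g != 0 -> okv t g ->
    Rep (push e t g s) (r ++ Lw t g).

Lemma Rep_valid s r : Rep s r -> valid e s.
Proof. elim=> {s r} [|s r t g _ IH Ht Hg _]; [exact: vnil | exact: vpush]. Qed.

Lemma Rep_top s r t h : Rep s r -> top t s = Some h ->
  exists r', [/\ Rep (pop e t s) r', W r (r' ++ Lw t h) & okv t h].
Proof.
move=> HR; elim: HR h => {s r} [|s r u g HR IH Hu Hg Hok] h //.
case: (u =P t) => [E|Hne].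
  subst u; rewrite top_push_same => -[<-]; rewrite pop_push.
  by exists r; split=> //; apply: weq_refl.
case Eut: (e u t).
  rewrite top_push_adj // => Ht.
  have [r' [HR' Hw Hok']] := IH _ Ht.
  have [_ Htop _ Es] := valid_top e_sym e_irr (Rep_valid HR) Ht.
  set s' := pop e t s in HR' Htop Es *.
  have Htu : e t u by rewrite e_sym.
  have -> : push e u g s = push e t h (push e u g s') by rewrite {1}Es push_comm.
  rewrite pop_push; exists (r' ++ Lw u g); split=> //.
  + apply: Rpush => //; by rewrite -Hu Es top_push_adj.
  + apply: weq_trans (weq_catr _ Hw) _.
    rewrite -(catA r' (Lw t h)) -(catA r' (Lw u g)); apply: weq_catl; exact: Lw_com.
rewrite top_push_na //; last by rewrite Eut.
by apply/eqP.
Qed.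

Lemma Rep_empty r : Rep (@empty T vec) r -> W r [::].
Proof.
move=> H; inversion H; first exact: weq_refl.
have := congr1 (fun s => s t) H0; by rewrite /push /empty eqxx.
Qed.

Lemma Rep_unique s r1 r2 : Rep s r1 -> Rep s r2 -> W r1 r2.
Proof.
move=> H1 H2; elim: H2 r1 H1 => {s r2} [|s r t g HR IH Ht Hg Hok] r1 H1.
  exact: Rep_empty.
have [r' [HR' Hw _]] := Rep_top H1 (top_push_same _ _ _ _).
rewrite pop_push in HR'.
apply: weq_trans Hw _; apply: weq_catr; exact: IH.
Qed.

Lemma okvD t g h : okv t g -> okv t h -> okv t (g + h).
Proof.
case=> [->|Hg]; first by left.
case=> [->|Hh]; first by left.
by right=> j Hj; rewrite mxE Hg // Hh // addr0.
Qed.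

Lemma Rep_act s r t g : Rep s r -> okv t g ->
  exists r'', Rep (act e t g s) r'' /\ W (r ++ Lw t g) r''.
Proof.
move=> HR Hok; rewrite /act /cur /base.
case Et: (top t s) => [h|].
  have [r' [HR' Hw Hok']] := Rep_top HR Et.
  have [_ Htop _ _] := valid_top e_sym e_irr (Rep_valid HR) Et.
  have Hw2 : W (r ++ Lw t g) (r' ++ Lw t (h + g)).
    apply: weq_trans (weq_catr _ Hw) _; rewrite -catA; apply: weq_catl; exact: Lw_add.
  rewrite /pushz; case: (h + g =P 0) => [E|/eqP Hne].
    by exists r'; split=> //; move: Hw2; rewrite E Lw0 cats0.
  exists (r' ++ Lw t (h + g)); split=> //; apply: Rpush => //; exact: okvD.
rewrite add0r /pushz; case: (g =P 0) => [E|/eqP Hne].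
  by exists r; split=> //; rewrite E Lw0 cats0; apply: weq_refl.
by exists (r ++ Lw t g); split; [apply: Rpush | apply: weq_refl].
Qed.

Lemma delta_lift (i k : 'I_m.+1) (b : bool) :
  (if b then - delta_mx 0 (lift ord0 i) else delta_mx 0 (lift ord0 i) : vec) 0 (lift ord0 k)
  = if k == i then (if b then -1 else 1) else 0.
Proof.
case: b; rewrite !mxE eqxx /= (inj_eq (@lift_inj _ ord0));
by case: (k == i); rewrite ?oppr0.
Qed.

Lemma TLs_delta s i b : uniq s ->
  TLs s (if b then - delta_mx 0 (lift ord0 i) else delta_mx 0 (lift ord0 i)) =
  if i \in s then [:: (inr i, b)] else [::].
Proof.
elim: s => [|j s IH] //= /andP [Hj Hu].
rewrite /TLs /= -/(TLs _ _) IH // in_cons delta_lift.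
case: (j =P i) => [E|Hne] /=.
  subst j; rewrite (negbTE Hj) cats0 eqxx /=; clear IH; by case: b.
have -> : (i == j) = false by apply/eqP => E; apply: Hne.
done.
Qed.

Lemma Lw_letter l b : Lw (lv l).1 (if b then - (lv l).2 else (lv l).2) = [:: (l, b)].
Proof.
case: l => [t|i] /=.
  rewrite /Lw; have -> : (if b then - delta_mx 0 ord0 else delta_mx 0 ord0 : vec) 0 ord0 = (if b then -1 else 1).
    by case: b; rewrite !mxE.
  rewrite /TL TLs0; last by move=> i; case: b; rewrite !mxE /= ?oppr0.
  by case: b; case: (t == x).
rewrite /Lw eqxx /TL TLs_delta ?index_enum_uniq // mem_index_enum.
have -> : (if b then - delta_mx 0 (lift ord0 i) else delta_mx 0 (lift ord0 i) : vec) 0 ord0 = 0.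
  by case: b; rewrite !mxE /= ?oppr0.
done.
Qed.

Lemma okv_letter l b : okv (lv l).1 (if b then - (lv l).2 else (lv l).2).
Proof.
case: l => [t|i] /=; last by left.
right=> j Hj; case: b; rewrite !mxE (negbTE Hj) /= ?andbF ?oppr0 //.
Qed.

Lemma Rep_run w s r : Rep s r -> exists r', Rep (runK w s) r' /\ W (r ++ w) r'.
Proof.
elim: w s r => [|l w IH] s r HR /=.
  by exists r; rewrite cats0; split=> //; apply: weq_refl.
have [r1 [HR1 Hw1]] := Rep_act HR (okv_letter l.1 l.2).
have [r2 [HR2 Hw2]] := IH _ _ HR1.
exists r2; split=> //.
rewrite Lw_letter -surjective_pairing in Hw1.
apply: weq_trans Hw2.
rewrite -cat1s catA; apply: weq_catr; exact: Hw1.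
Qed.

End HSide.

Local Open Scope ring_scope.

Section Link.
Variables (T : finType) (e : rel T) (e_sym : symmetric e) (e_irr : irreflexive e) (x : T) (m : nat) (M : nat).

Let vact := valid_act e_sym e_irr.
Let aadd := act_add e_sym e_irr.
Let a0 := act0 e_sym e_irr.

Notation vec := (vec m).
Notation LT := (LT T m).

Definition phi (g : vec) : int := \sum_(j < m.+2) g 0 j * Posz (M ^ j).

Definition fM (l : LT) : word T :=
  match l with inl t => gen t | inr i => nseq (M ^ i.+1) (x, false) end.

Definition mapS (s : state T vec) : state T int := fun t => map (omap phi) (s t).

Lemma winv_nseq (a : T) b n : winv (nseq n (a, b)) = nseq n (a, ~~ b).
Proof. by rewrite /winv map_nseq rev_nseq. Qed.

Lemma wsubst_nseq_inl t b n : wsubst fM (nseq n (inl t, b)) = nseq n (t, b).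
Proof.
elim: n => [|n IH] //; rewrite [nseq _ _]/= -cat1s wsubst_cat IH /wsubst /=; by clear IH; case: b.
Qed.

Lemma wsubst_pw_inl t k : wsubst fM (pw (inl t) k) = pw t k.
Proof. case: k => n; [exact: wsubst_nseq_inl | exact: (wsubst_nseq_inl t true n.+1)]. Qed.

Lemma run_inr1 i b s : valid e s ->
  runG e (wsubst fM [:: (inr i, b)]) s = act e x (if b then - Posz (M ^ i.+1) else Posz (M ^ i.+1)) s.
Proof.
move=> Hs; rewrite /wsubst /= cats0; case: b.
  by rewrite winv_nseq run_nseq.
by rewrite run_nseq.
Qed.

Lemma run_nseq_inr i b n s : valid e s ->
  runG e (wsubst fM (nseq n (inr i, b))) s
  = act e x (if b then - Posz (n * M ^ i.+1) else Posz (n * M ^ i.+1)) s.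
Proof.
elim: n s => [|n IH] s Hs.
  by rewrite mul0n; case: b; rewrite ?oppr0 a0.
rewrite [nseq _ _]/= -cat1s wsubst_cat runG_cat run_inr1 // IH; last exact: vact.
rewrite aadd //; congr act; clear IH; case: b; rewrite mulSn; lia.
Qed.

Lemma run_pw_inr i k s : valid e s ->
  runG e (wsubst fM (pw (inr i) k)) s = act e x (k * Posz (M ^ i.+1)) s.
Proof.
move=> Hs; case: k => n.
  by rewrite [pw _ _]/= run_nseq_inr //; congr act; lia.
rewrite (run_nseq_inr _ true n.+1 Hs); congr act; nia.
Qed.

Lemma run_TLs s0 (g : vec) s : valid e s ->
  runG e (wsubst fM (TLs T s0 g)) s
  = act e x (\sum_(i <- s0) g 0 (lift ord0 i) * Posz (M ^ i.+1)) s.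
Proof.
elim: s0 s => [|i s0 IH] s Hs.
  by rewrite big_nil /= a0.
rewrite /TLs /= -/(TLs T _ _) wsubst_cat runG_cat run_pw_inr // IH; last exact: vact.
by rewrite aadd // big_cons.
Qed.

Lemma phi_x (g : vec) : phi g = g 0 ord0 + \sum_(i <- index_enum 'I_m.+1) g 0 (lift ord0 i) * Posz (M ^ i.+1).
Proof.
rewrite /phi big_ord_recl /= expn0 mulr1; congr (_ + _); by apply: eq_bigr => i _.
Qed.

Lemma phi_ok t (g : vec) : okv x t g -> t != x -> phi g = g 0 ord0.
Proof.
case=> [->|H]; first by rewrite eqxx.
move=> _; rewrite /phi big_ord_recl /= expn0 mulr1 big1 ?addr0 // => i _.
by rewrite H ?mul0r // neq_lift.
Qed.

Lemma run_Lw t (g : vec) s : valid e s -> okv x t g ->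
  runG e (wsubst fM (Lw x t g)) s = act e t (phi g) s.
Proof.
move=> Hs Hok; rewrite /Lw; case: (t =P x) => [->|/eqP Hne].
  rewrite wsubst_cat runG_cat wsubst_pw_inl run_pw // run_TLs; last exact: vact.
  by rewrite aadd // phi_x.
by rewrite cats0 wsubst_pw_inl run_pw // (phi_ok Hok Hne).
Qed.

Lemma top_mapS t s : top t (mapS s) = omap phi (top t s).
Proof. by rewrite /top /mapS; case: (s t). Qed.

Lemma mapS_push t g s : mapS (push e t g s) = push e t (phi g) (mapS s).
Proof.
apply: functional_extensionality => w; rewrite /mapS /push.
by case: (w == t); case: (e t w).
Qed.

Lemma link s r : Rep e x s r -> (forall t g, Some g \in s t -> phi g != 0) ->
  valid e (mapS s) /\ runG e (wsubst fM r) (@empty T int) = mapS s.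
Proof.
elim=> {s r} [|s r t g HR IH Ht Hg Hok] Hgood.
  by split; [exact: vnil | by []].
have Hgood' : forall t' g', Some g' \in s t' -> phi g' != 0.
  move=> t' g' Hin; apply: (Hgood t'); rewrite /push.
  by case: (t' == t); case: (e t t'); rewrite ?in_cons Hin ?orbT.
have Hphi : phi g != 0 by apply: (Hgood t); rewrite /push eqxx in_cons eqxx.
have [Hv Hrun] := IH Hgood'.
have Htm : top t (mapS s) = None by rewrite top_mapS Ht.
split; first by rewrite mapS_push; apply: vpush.
rewrite wsubst_cat runG_cat Hrun run_Lw // mapS_push.
by rewrite /act /cur /base Htm add0r /pushz (negbTE Hphi).
Qed.

End Link.

Local Open Scope ring_scope.

Lemma digits (M : nat) k (d : 'I_k -> int) : (forall j, (`|d j| < M)%N) ->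
  \sum_(j < k) d j * Posz (M ^ j) = 0 -> forall j, d j = 0.
Proof.
elim: k d => [|k IH] d Hd Hs j; first by case: j.
move: Hs; rewrite big_ord_recl /= expn0 mulr1.
set Sm := \sum_(i < k) d (lift ord0 i) * Posz (M ^ i).
have -> : \sum_(i < k) d (lift ord0 i) * Posz (M ^ bump 0 i) = Posz M * Sm.
  rewrite /Sm mulr_sumr; apply: eq_bigr => i _.
  by rewrite /bump /= expnS PoszM mulrCA.
move=> H.
have Hd0 := Hd ord0.
have HS : Sm = 0 by nia.
have H0 : d ord0 = 0 by move: H; rewrite HS mulr0 addr0.
have Hl := IH (fun i => d (lift ord0 i)) (fun i => Hd _) HS.
by case: (unliftP ord0 j) => [i ->|->].
Qed.

Lemma In_mem (A : eqType) (u : A) S : List.In u S -> u \in S.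
Proof.
elim: S => [|a S IH] //= [->|H]; rewrite in_cons ?eqxx //.
by rewrite IH ?orbT.
Qed.

Lemma map_omap_inj (A B : eqType) (f : A -> B) (l1 l2 : seq (option A)) :
  (forall a b, Some a \in l1 -> Some b \in l2 -> f a = f b -> a = b) ->
  map (omap f) l1 = map (omap f) l2 -> l1 = l2.
Proof.
elim: l1 l2 => [|a l1 IH] [|b l2] //= Hinj [Hab Hl].
have -> : l1 = l2.
  apply: IH => // a' b' H1 H2; apply: Hinj; by rewrite in_cons ?H1 ?H2 orbT.
congr (_ :: _); case: a b Hinj Hab => [a|] [b|] //= Hinj [E].
by rewrite (Hinj a b) // in_cons eqxx.
Qed.

Lemma valid_nz (X : eqType) (e : rel X) (V : zmodType) (s : state X V) :
  valid e s -> forall t g, Some g \in s t -> g != 0.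
Proof.
elim=> {s} [|s u g Hs IH Hu Hg] t g' //=.
rewrite /push; case: (t == u); case: (e u t); rewrite ?in_cons //=;
  try (by apply: IH); case/orP => [/eqP [->]//|]; apply: IH.
Qed.

Local Open Scope ring_scope.

Section Main.
Variables (T : finType) (e : rel T) (e_sym : symmetric e) (e_irr : irreflexive e) (x : T) (m : nat).

Lemma wsubst_cons (X Y : Type) (f : X -> word Y) l w : wsubst f (l :: w) = wsubst f [:: l] ++ wsubst f w.
Proof. by rewrite -wsubst_cat. Qed.

Lemma wsubst_inl M (w : word T) : wsubst (fM x (m:=m) M) (map (fun l => (inl l.1, l.2)) w) = w.
Proof.
elim: w => [|[a b] w IH] //.
rewrite map_cons wsubst_cons IH; by case: b.
Qed.

Lemma nseq_com (c : word T) k : in_centraliser e x c -> wcom (pc_rel e) c (nseq k (x, false)).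
Proof.
move=> H; elim: k => [|k IH] /=; first exact: wcom_nil.
by have := wcom_catr H IH.
Qed.

Lemma fM_hom M : is_hom (ext_rel e x m.+2) (pc_rel e) (fM x (m:=m) M).
Proof.
move=> r [[r0 [Hr0 ->]]|[[i [j ->]]|[i [c [Hc ->]]]]].
- rewrite wsubst_inl; exact: weq_relr.
- rewrite /wcomm !wsubst_cat !wsubst_winv /= /wsubst /= !cats0 -/(wsubst _ _).
  set A := nseq _ _; set B := nseq _ _.
  have -> : A ++ B = B ++ A by rewrite /A /B -!nseqD addnC.
  rewrite catA -winv_cat; exact: weq_winvl.
- rewrite /wcomm !wsubst_cat !wsubst_winv wsubst_inl.
  rewrite {1 2}/wsubst /= !cats0.
  set A := nseq _ _.
  have Hc' := nseq_com (M ^ i.+1) Hc.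
  apply: weq_trans (_ : weq _ (winv A ++ winv c ++ c ++ A) _).
    by apply: weq_catl; apply: weq_catl; apply: weq_sym; exact: Hc'.
  rewrite [winv c ++ _]catA.
  apply: weq_trans (weq_cat (winv A) A (weq_winvl _ c)) _.
  exact: weq_winvl.
Qed.

End Main.

Lemma phi_inj m (B : nat) (g h : vec m) :
  (forall j, (absz (g 0%R j) <= B)%N) -> (forall j, (absz (h 0%R j) <= B)%N) ->
  phi (2 * B).+1 g = phi (2 * B).+1 h -> g = h.
Proof.
move=> Hg Hh E.
have E2 : \sum_(j < m.+2) (g 0 j - h 0 j) * Posz (((2 * B).+1) ^ j) = 0.
  rewrite -[RHS](subrr (phi (2 * B).+1 h)) -{1}E /phi -sumrB.
  by apply: eq_bigr => j _; rewrite mulrBl.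
have := digits (d := fun j => g 0 j - h 0 j) _ E2.
move=> H; apply/rowP => j; apply/eqP; rewrite -subr_eq0; apply/eqP; apply: H.
move=> k; have := Hg k; have := Hh k; lia.
Qed.

Local Close Scope ring_scope.
Unset Implicit Arguments.

Theorem lemma4p1 (T : finType) (e : rel T) (e_sym : symmetric e)
  (e_irr : irreflexive e) (x : T) (n : nat) (hn : 2 <= n) :
  discriminated_by (ext_rel e x n) (pc_rel e).
Proof.
case: n hn => [|[|m]] // _.
move=> S.
pose sK u := runK e x (m:=m) u (@empty T (vec m)).
pose D := flatten [seq flatten [seq pmap id (sK u t) | t <- enum T] | u <- S].
pose B := \max_(g <- D) \max_(j < m.+2) absz ((g : vec m) 0%R j).
pose M := (2 * B).+1.
have inD : forall u t g, u \in S -> Some g \in sK u t -> g \in D.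
  move=> u t g Hu Hg; apply/flatten_mapP; exists u => //.
  apply/flatten_mapP; exists t; first exact: mem_enum.
  by rewrite mem_pmap map_id.
have bnd : forall g j, g \in D -> (absz ((g : vec m) 0%R j) <= B)%N.
  move=> g j Hg.
  have H1 := @leq_bigmax_seq _ D (fun _ => true) (fun g : vec m => \max_(j < m.+2) absz (g 0%R j)) g Hg isT.
  have H2 := @leq_bigmax _ (fun j => absz (g 0%R j)) j.
  exact: leq_trans H2 H1.
have bnd0 : forall j, (absz ((0%R : vec m) 0%R j) <= B)%N by move=> j; rewrite mxE.
have RepS : forall u, exists r, Rep e x (sK u) r /\ weq (Hrel e x (m:=m)) u r.
  move=> u; have [r [HR Hw]] := Rep_run e_sym e_irr u (Rnil e x m).
  by exists r.
have good : forall u, u \in S -> forall t g, Some g \in sK u t -> phi M g != 0%R.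
  move=> u Hu t g Hg; apply/negP => /eqP E.
  have [r [HR _]] := RepS u.
  have := valid_nz (Rep_valid HR) Hg; rewrite (@phi_inj m B g 0%R) ?eqxx //.
    by move=> j; apply: bnd; exact: (inD u t).
  rewrite E /phi big1 // => j _; by rewrite mxE mul0r.
exists (fM x (m:=m) M); split; first exact: fM_hom.
move=> u v Hu Hv Hnot HG; apply: Hnot.
have Hu' := In_mem Hu; have Hv' := In_mem Hv.
have [ru [HRu Hwu]] := RepS u.
have [rv [HRv Hwv]] := RepS v.
have Hhom : is_hom (ext_rel e x m.+2) (pc_rel e) (fM x (m:=m) M) by exact: fM_hom.
have HG2 : weq (pc_rel e) (wsubst (fM x M) ru) (wsubst (fM x M) rv).
  apply: weq_trans (weq_sym (hom_weq Hhom Hwu)) _.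
  exact: weq_trans HG (hom_weq Hhom Hwv).
have Hrun := runG_sound e_sym e_irr HG2 (vnil e int).
have [_ Lu] := link e_sym e_irr HRu (good u Hu').
have [_ Lv] := link e_sym e_irr HRv (good v Hv').
rewrite Lu Lv in Hrun.
have Es : sK u = sK v.
  apply: functional_extensionality => t.
  have := congr1 (fun s => s t) Hrun; rewrite /mapS.
  apply: map_omap_inj => a b Ha Hb.
  apply: phi_inj => j; apply: bnd; [exact: (inD u t) | exact: (inD v t)].
rewrite Es in HRu.
apply: weq_trans Hwu _; apply: weq_trans (Rep_unique e_sym e_irr HRu HRv) _.
exact: weq_sym.
Qed.
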